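(* Fix $\theta,\delta>0$. For $\sigma^2,m>0$ let $X,Y$ be independent mean-zero Gaussian random variables with $\mathbb{E}X^2=\sigma^2$ and $\mathbb{E}Y^2=m\sigma^2$. Then there is a function $\varepsilon(m)$, depending only on $\theta,\delta,m$, with $\varepsilon(m)\to0$ as $m\to\infty$, such that $$\sup_{\delta\le\sigma^2\le1,\ t\le\delta^{-1}}\frac{p[X=t\mid X+Y\ge(m+1)\sigma^2\theta]}{p[N(\sigma^2\theta,\sigma^2)=t]}\le1+\varepsilon(m),$$ where $p[\,\cdot=t]$ denotes the probability density at $t$ (the numerator being the conditional density of $X$ given the event $X+Y\ge(m+1)\sigma^2\theta$) and $N(\sigma^2\theta,\sigma^2)$ is a Gaussian with mean $\sigma^2\theta$ and variance $\sigma^2$. *)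

(* Defs.v *)
From HB Require Import structures.
From mathcomp Require Import all_boot all_order all_algebra.
From mathcomp Require Import all_classical all_reals all_analysis.
Set Implicit Arguments. Unset Strict Implicit. Unset Printing Implicit Defensive.
Import Order.TTheory GRing.Theory Num.Theory.
Import numFieldNormedType.Exports.
Local Open Scope classical_set_scope.
Local Open Scope ring_scope.

(* Setting: X ~ N(0, v), Y ~ N(0, m v) independent, i.e. (X,Y) is the pair of
   coordinates on R x R under the product probability
   normal_prob 0 (sqrt v) \x normal_prob 0 (sqrt (m v)).
   (normal_prob / normal_pdf are parametrized by the standard deviation.) *)

Definition joint_law {R : realType} (v m : R) :=
  (normal_prob 0 (Num.sqrt v) \x normal_prob 0 (Num.sqrt (m * v)))%E.

Definition thresh {R : realType} (v m theta : R) : R := (m + 1) * v * theta.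

Definition prob_event {R : realType} (v m theta : R) : R :=
  fine (joint_law v m [set z : R * R | thresh v m theta <= z.1 + z.2]).

(* Conditional density of X at t given the event {X + Y >= c}:
   (joint density of (X,Y) integrated over y with t + y >= c) / P[X+Y >= c]
   = p_X(t) * P[Y >= c - t] / P[X + Y >= c]. *)
Definition cond_density_X {R : realType} (v m theta t : R) : R :=
  normal_pdf 0 (Num.sqrt v) t
  * fine (normal_prob 0 (Num.sqrt (m * v)) `[thresh v m theta - t, +oo[)
  / prob_event v m theta.

(* Main.v *)
Require Import Defs.
From HB Require Import structures.
From mathcomp Require Import all_boot all_order all_algebra.
From mathcomp Require Import all_classical all_reals all_analysis.
From mathcomp Require Import measurable_realfun.
From mathcomp.algebra_tactics Require Import ring lra.
Set Implicit Arguments. Unset Strict Implicit. Unset Printing Implicit Defensive.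
Import Order.TTheory GRing.Theory Num.Theory.
Import numFieldNormedType.Exports.
Local Open Scope classical_set_scope.
Local Open Scope ring_scope.

Section S.
Context {R : realType}.
Local Notation mu := (@lebesgue_measure R).
Section expint.
Variable th : R.
Hypothesis th0 : 0 < th.

Let F (y : R) : R := - (expR (- th * y)) / th.

Let cexp : continuous (fun z : R^o => expR (- th * z)).
Proof.
move=> z; apply: continuous_comp; last exact: continuous_expR.
by apply: continuousM => //; apply: (@continuousN _ R^o); exact: cst_continuous.
Qed.

Let cF : continuous F.
Proof.
move=> z; apply: (@continuousM _ R^o (fun y => - expR (- th * y)) (fun=> th^-1)).
  by apply: (@continuousN _ R^o); exact: cexp.
exact: cst_continuous.
Qed.

Let dF y : derivable F y 1.
Proof. rewrite /F; by []. Qed.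

Let F'E y : F^`()%classic y = expR (- th * y).
Proof.
rewrite /F derive1Mr// derive1N// derive1_comp// derive1E.
have /funeqP -> := @derive_expR R.
rewrite derive1Ml// derive1_id mulr1.
by rewrite mulrN opprK -mulrA divff ?gt_eqF// mulr1.
Qed.

Lemma int_exp_itv a b : a < b ->
  (\int[mu]_(y in `[a, b]) (expR (- th * y))%:E =
   ((expR (- th * a) - expR (- th * b)) / th)%:E)%E.
Proof.
move=> ab.
rewrite (continuous_FTC2 ab (F := F)).
- by rewrite /F -EFinB; congr EFin; rewrite mulrBl !mulNr opprK addrC.
- by apply: continuous_subspaceT => z; exact: cexp.
- split.
  + by move=> z _; exact: dF.
  + by apply/cvg_at_right_filter; exact: cF.
  + by apply/cvg_at_left_filter; exact: cF.
- by move=> z _; exact: F'E.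
Qed.

Lemma int_exp_itvy a :
  (\int[mu]_(y in `[a, +oo[) (expR (- th * y))%:E =
   (expR (- th * a) / th)%:E)%E.
Proof.
rewrite (@ge0_continuous_FTC2y _ _ F _ 0).
- by rewrite /F -EFinB sub0r mulNr opprK.
- by move=> x _; exact: expR_ge0.
- by apply: continuous_subspaceT => z; exact: cexp.
- rewrite /F -(mul0r th^-1) -oppr0; apply: cvgMl; apply: cvgN.
  rewrite (_ : (fun x => expR (- th * x)) =
               (fun z => expR (- z)) \o (fun z => th * z)); last first.
    by apply: eq_fun => x; rewrite mulNr.
  apply: (@cvg_comp _ _ _ _ _ _ (pinfty_nbhs R)); last exact: cvgr_expR.
  exact: gt0_cvgMry.
- by move=> x _; exact: dF.
- by apply/cvg_at_right_filter; exact: cF.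
- by move=> x _; exact: F'E.
Qed.
End expint.

Lemma integral_normal_prob (a s : R) (f : R -> \bar R) U : measurable U -> measurable_fun U f ->
  (\int[normal_prob a s]_(x in U) `|f x| < +oo)%E ->
  (\int[normal_prob a s]_(x in U) f x =
   \int[mu]_(x in U) (f x * (normal_pdf a s x)%:E))%E.
Proof.
move=> mU mf finf.
rewrite -(Radon_Nikodym_change_of_variables (normal_prob_dominates a s))//=; last first.
  by apply/integrableP; split.
apply: ae_eq_integral => //.
- apply: emeasurable_funM => //; apply: (measurable_int mu).
  apply: (integrableS _ _ (@subsetT _ _)) => //=.
  by apply: Radon_Nikodym_integrable; exact: normal_prob_dominates.
- apply: emeasurable_funM => //=; apply/measurableT_comp => //=.
  by apply/measurable_funTS; exact: measurable_normal_pdf.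
- apply: ae_eqe_mul2l => /=.
  rewrite Radon_NikodymE//=; first exact: normal_prob_dominates.
  move=> abmu.
  case: cid => /= h [h1 h2 h3].
  apply: integral_ae_eq => //=.
  + exact: integrableS h2.
  + by apply/measurable_funTS/measurableT_comp =>//; exact: measurable_normal_pdf.
  + by move=> E E01 mE; rewrite -h3.
Qed.
Lemma pdfE (a s x : R) : 0 < s ->
  normal_pdf a s x = normal_peak s * expR (- (x - a) ^+ 2 / (s ^+ 2 *+ 2)).
Proof. by move=> s0; rewrite /normal_pdf gt_eqF. Qed.

Lemma meas_cexp (K th : R) : measurable_fun setT (fun y : R => (K * expR (- th * y))%:E).
Proof.
apply/measurable_EFinP; apply: measurable_funM => //.
apply: measurableT_comp => //; exact: measurable_funM.
Qed.


Lemma EFin_ge0 (r : R) : 0 <= r -> (0 <= r%:E)%E.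
Proof. by rewrite lee_fin. Qed.

Lemma fine_le_of (x : \bar R) (r : R) : (0 <= x)%E -> (x <= r%:E)%E -> fine x <= r.
Proof. by case: x => //= [x' _|]; rewrite ?lee_fin. Qed.

Lemma normal_prob_le1 (a s : R) A : measurable A -> (normal_prob a s A <= 1)%E.
Proof.
move=> mA; rewrite -(@probability_setT _ _ _ (normal_prob a s)).
by apply: le_measure => //; rewrite inE.
Qed.

Lemma upperU (m v th b : R) : 0 < m -> 0 < v -> 0 < th ->
  fine (normal_prob 0 (Num.sqrt (m * v)) `[b, +oo[) <=
  normal_peak (Num.sqrt (m * v)) * expR (m * v * th ^+ 2 / 2 - th * b) / th.
Proof.
move=> m0 v0 th0.
set s := Num.sqrt (m * v).
have mv0 : 0 < m * v by rewrite mulr_gt0.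
have s0 : 0 < s by rewrite sqrtr_gt0.
have s2 : s ^+ 2 = m * v by rewrite sqr_sqrtr// ltW.
set K := normal_peak s * expR (m * v * th ^+ 2 / 2).
apply: fine_le_of; first exact: measure_ge0.
rewrite /normal_prob.
apply: (@le_trans _ _ (\int[mu]_(y in `[b, +oo[) (K * expR (- th * y))%:E)%E).
  apply: ge0_le_integral => //.
  - by move=> y _; rewrite lee_fin normal_pdf_ge0.
  - apply/measurable_EFinP; apply: measurable_funTS; exact: measurable_normal_pdf.
  - apply: measurable_funTS; exact: meas_cexp.
  move=> y _; rewrite lee_fin pdfE // /K -mulrA ler_wpM2l ?normal_peak_ge0//.
  rewrite -expRD ler_expR s2 subr0.
  have -> : m * v * th ^+ 2 / 2 + - th * y =
     - y ^+ 2 / ((m * v) *+ 2) + (y - m * v * th) ^+ 2 / ((m * v) *+ 2).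
    by field; rewrite (gt_eqF v0) (gt_eqF m0).
  by rewrite -[X in X <= _]addr0 lerD2l divr_ge0 ?sqr_ge0// mulrn_wge0// ltW.
under eq_integral do rewrite EFinM.
rewrite ge0_integralZl //; last 2 first.
- apply/measurable_EFinP; apply: measurable_funTS.
  apply: measurableT_comp => //; exact: measurable_funM.
- by rewrite lee_fin /K mulr_ge0 ?normal_peak_ge0 ?expR_ge0.
rewrite int_exp_itvy // -EFinM lee_fin /K.
have -> : normal_peak s * expR (m * v * th ^+ 2 / 2 - th * b) / th = normal_peak s * expR (m * v * th ^+ 2 / 2) * (expR (- th * b) / th).
  by rewrite -mulNr expRD; ring.
by [].
Qed.


Lemma expo_ineq (m v th L x y : R) : 0 < m -> 0 < v ->
  0 <= y - ((m + 1) * v * th - x) -> y - ((m + 1) * v * th - x) <= L ->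
  - ((m + 1) * v * th ^+ 2 / 2) - L ^+ 2 / (m * v)
  - (x - v * th) ^+ 2 / ((m * v / (m + 2)) *+ 2)
  + th * ((m + 1) * v * th - x) - th * y
  <= - x ^+ 2 / (v *+ 2) - y ^+ 2 / (m * v *+ 2).
Proof.
move=> m0 v0; set u := y - _ => u0 uL.
have m2 : m + 2 != 0 by rewrite gt_eqF// addr_gt0.
rewrite -subr_ge0.
have -> : - x ^+ 2 / (v *+ 2) - y ^+ 2 / (m * v *+ 2) -
  (- ((m + 1) * v * th ^+ 2 / 2) - L ^+ 2 / (m * v) -
   (x - v * th) ^+ 2 / ((m * v / (m + 2)) *+ 2) +
   th * ((m + 1) * v * th - x) - th * y) =
  ((L ^+ 2 - u ^+ 2) *+ 2 + (u + x - v * th) ^+ 2) / (m * v *+ 2).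
  rewrite /u; field.
  by rewrite m2 (gt_eqF v0) (gt_eqF m0).
apply: divr_ge0; last by rewrite mulrn_wge0// mulr_ge0// ltW.
apply: addr_ge0; last exact: sqr_ge0.
rewrite mulrn_wge0// subr_ge0 ler_sqr ?nnegrE//.
exact: le_trans uL.
Qed.


Lemma core_ineq (m v th L x y : R) : 0 < m -> 0 < v ->
  0 <= y - ((m + 1) * v * th - x) -> y - ((m + 1) * v * th - x) <= L ->
  normal_peak (Num.sqrt (m * v)) *
    expR (- ((m + 1) * v * th ^+ 2 / 2) - L ^+ 2 / (m * v)) *
    (normal_peak (Num.sqrt v) / normal_peak (Num.sqrt (m * v / (m + 2))))
  * normal_pdf (v * th) (Num.sqrt (m * v / (m + 2))) x
  * expR (th * ((m + 1) * v * th - x)) * expR (- th * y)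
  <= normal_pdf 0 (Num.sqrt v) x * normal_pdf 0 (Num.sqrt (m * v)) y.
Proof.
move=> m0 v0 u0 uL.
have mv0 : 0 < m * v by rewrite mulr_gt0.
have m20 : 0 < m + 2 by rewrite addr_gt0.
have mv20 : 0 < m * v / (m + 2) by rewrite divr_gt0.
have s'0 : 0 < Num.sqrt (m * v / (m + 2)) by rewrite sqrtr_gt0.
have pk0 : normal_peak (Num.sqrt (m * v / (m + 2))) != 0.
  by rewrite gt_eqF// normal_peak_gt0// gt_eqF.
rewrite !pdfE ?sqrtr_gt0// !sqr_sqrtr ?(ltW v0) ?(ltW mv0) ?(ltW mv20) // !subr0.
set pX := normal_peak (Num.sqrt v).
set pY := normal_peak (Num.sqrt (m * v)).
set p' := normal_peak _.
have -> : pY * expR (- ((m + 1) * v * th ^+ 2 / 2) - L ^+ 2 / (m * v)) *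
    (pX / p') * (p' * expR (- (x - v * th) ^+ 2 / (m * v / (m + 2) *+ 2))) *
    expR (th * ((m + 1) * v * th - x)) * expR (- th * y) =
  (pX * pY) * expR (- ((m + 1) * v * th ^+ 2 / 2) - L ^+ 2 / (m * v)
  - (x - v * th) ^+ 2 / ((m * v / (m + 2)) *+ 2)
  + th * ((m + 1) * v * th - x) - th * y).
  rewrite !mulNr !expRD !expRN; field.
  by rewrite pk0 !gt_eqF ?expR_gt0.
have -> : pX * expR (- x ^+ 2 / (v *+ 2)) * (pY * expR (- y ^+ 2 / (m * v *+ 2)))
  = (pX * pY) * expR (- x ^+ 2 / (v *+ 2) - y ^+ 2 / (m * v *+ 2)).
  by rewrite [in RHS]expRD -[in RHS](mulNr (y ^+ 2)); ring.
rewrite ler_wpM2l ?mulr_ge0 ?normal_peak_ge0// ler_expR.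
exact: expo_ineq.
Qed.


Lemma measurable_halfplane (c : R) :
  measurable [set z : R * R | c <= z.1 + z.2].
Proof.
have mf : measurable_fun setT (fun z : R * R => z.1 + z.2).
  apply: (@measurable_funD _ _ _ setT fst snd).
  exact: measurable_fst. exact: measurable_snd.
have -> : [set z : R * R | c <= z.1 + z.2] =
    (fun z : R * R => z.1 + z.2) @^-1` `[c, +oo[%classic.
  by apply/seteqP; split => z /=; rewrite in_itv/= andbT.
rewrite -[X in measurable X]setTI.
exact: mf measurableT _ (measurable_itv _).
Qed.


Lemma lowerP (m v th L : R) : 0 < m -> 0 < v -> 0 < th -> 0 < L -> (
  (normal_peak (Num.sqrt (m * v)) *
    expR (- ((m + 1) * v * th ^+ 2 / 2) - L ^+ 2 / (m * v)) *
    (normal_peak (Num.sqrt v) / normal_peak (Num.sqrt (m * v / (m + 2))))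
   * ((1 - expR (- th * L)) / th))%:E
  <= joint_law v m [set z : R * R | (thresh v m th <= z.1 + z.2)%R]%classic)%E.
Proof.
move=> m0 v0 th0 L0.
set S := [set z : R * R | _].
set C0 := normal_peak _ * _ * _.
set s' := Num.sqrt (m * v / (m + 2)).
set k := (1 - expR (- th * L)) / th.
have mS : measurable S := measurable_halfplane _.
have C00 : 0 <= C0.
  by rewrite /C0 !mulr_ge0 ?normal_peak_ge0 ?expR_ge0 ?invr_ge0 ?normal_peak_ge0.
have k0 : 0 <= k.
  rewrite /k divr_ge0 ?(ltW th0)// subr_ge0 -expR0 ler_expR.
  by rewrite mulNr oppr_le0 mulr_ge0// ltW.
have mF : measurable_fun setT (normal_prob 0 (Num.sqrt (m * v)) \o xsection S).
  exact: measurable_fun_xsection.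
rewrite /joint_law /product_measure1 /=.
rewrite integral_normal_prob //; last first.
  apply: (@le_lt_trans _ _ 1%E); last exact: ltry.
  rewrite -(@probability_setT _ _ _ (normal_prob 0 (Num.sqrt v))).
  rewrite -[X in (_ <= X)%E]mul1e -integral_cst //.
  apply: ge0_le_integral => //.
  - by apply: measurableT_comp => //.
  - move=> x _; rewrite /= gee0_abs ?measure_ge0 //.
    by apply: normal_prob_le1; exact: measurable_xsection.
rewrite -[X in (X <= _)%E]mule1 -(integral_normal_pdf (v * th) s').
rewrite -ge0_integralZl //; last 3 first.
- by apply/measurable_EFinP; exact: measurable_normal_pdf.
- by move=> x _; rewrite lee_fin normal_pdf_ge0.
- by rewrite lee_fin mulr_ge0.
apply: ge0_le_integral => //.
- move=> x _; apply: mule_ge0; first by rewrite lee_fin mulr_ge0.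
  by rewrite lee_fin normal_pdf_ge0.
- apply: emeasurable_funM; first exact: measurable_cst.
  by apply/measurable_EFinP; exact: measurable_normal_pdf.
- apply: emeasurable_funM => //.
  by apply/measurable_EFinP; exact: measurable_normal_pdf.
move=> x _.
set a := thresh v m th - x.
have sub : `[a, a + L] `<=` xsection S x.
  move=> y /=; rewrite in_itv/= => /andP[ay _].
  by rewrite /xsection/= inE /S /= -lerBlDl.
have pX0 : (0 <= (normal_pdf 0 (Num.sqrt v) x)%:E)%E.
  by rewrite lee_fin normal_pdf_ge0.
have H1 : (normal_prob 0 (Num.sqrt (m * v)) `[a, (a + L)%R] *
   (normal_pdf 0 (Num.sqrt v) x)%:E <=
   normal_prob 0 (Num.sqrt (m * v)) (xsection S x) *
   (normal_pdf 0 (Num.sqrt v) x)%:E)%E.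
  apply: lee_pmul => //.
  by apply: le_measure => //; rewrite inE //; exact: measurable_xsection.
apply: le_trans H1.
have mpY : measurable_fun `[a, a + L] (fun y => (normal_pdf 0 (Num.sqrt (m * v)) y)%:E).
  by apply/measurable_EFinP; apply: measurable_funTS; exact: measurable_normal_pdf.
rewrite /normal_prob -ge0_integralZr //; last first.
  by move=> y _; rewrite lee_fin normal_pdf_ge0.
set K := C0 * normal_pdf (v * th) s' x * expR (th * a).
have -> : ((C0 * k)%:E * (normal_pdf (v * th) s' x)%:E =
    \int[mu]_(y in `[a, (a + L)%R]) (K%:E * (expR (- th * y))%:E))%E.
  rewrite ge0_integralZl //; last 2 first.
  - apply/measurable_EFinP; apply: measurable_funTS.
    apply: measurableT_comp => //; exact: measurable_funM.
  - apply: EFin_ge0; apply: mulr_ge0; [apply: mulr_ge0 => //; exact: normal_pdf_ge0 | exact: expR_ge0].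
  rewrite int_exp_itv //; last by rewrite ltrDl.
  rewrite -!EFinM; congr EFin.
  have eA : expR (- th * (a + L)) = expR (- th * a) * expR (- th * L).
    by rewrite mulrDr expRD.
  have EF : expR (th * a) * expR (- th * a) = 1.
    by rewrite -expRD mulNr addrN expR0.
  rewrite /K /k eA.
  transitivity (C0 * normal_pdf (v * th) s' x * (expR (th * a) * expR (- th * a))
     * ((1 - expR (- th * L)) / th)).
    by rewrite EF mulr1; ring.
  by ring.
apply: ge0_le_integral => //.
- move=> y _; rewrite -EFinM; apply: EFin_ge0; apply: mulr_ge0 => //.
    apply: mulr_ge0; [apply: mulr_ge0 => //; exact: normal_pdf_ge0 | exact: expR_ge0].
- apply: emeasurable_funM; first exact: measurable_cst.
  apply/measurable_EFinP; apply: measurable_funTS.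
  apply: measurableT_comp => //; exact: measurable_funM.
- apply: emeasurable_funM => //; exact: measurable_cst.
move=> y; rewrite /= in_itv /= => /andP[ay yaL].
rewrite -!EFinM lee_fin [in X in _ <= X]mulrC /K /C0 /a /thresh.
apply: core_ineq => //.
- by move: ay; rewrite /a /thresh; lra.
- by move: yaL; rewrite /a /thresh; lra.
Qed.


Lemma joint_fin (m v : R) (S : set (R * R)) : measurable S ->
  joint_law v m S \is a fin_num.
Proof.
move=> mS.
have mF : measurable_fun setT (normal_prob 0 (Num.sqrt (m * v)) \o xsection S).
  exact: measurable_fun_xsection.
rewrite ge0_fin_numE; last exact: integral_ge0.
apply: (@le_lt_trans _ _ 1%E); last exact: ltry.
rewrite /joint_law /product_measure1 /=.
rewrite -(@probability_setT _ _ _ (normal_prob 0 (Num.sqrt v))).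
rewrite -[X in (_ <= X)%E]mul1e -integral_cst //.
apply: ge0_le_integral => //.
move=> x _; apply: normal_prob_le1; exact: measurable_xsection.
Qed.

Lemma pX_pZ (v th t : R) : 0 < v ->
  normal_pdf 0 (Num.sqrt v) t =
  normal_pdf (v * th) (Num.sqrt v) t * expR (- th * t + v * th ^+ 2 / 2).
Proof.
move=> v0; rewrite !pdfE ?sqrtr_gt0// sqr_sqrtr ?(ltW v0)// subr0. rewrite -[RHS]mulrA -expRD.
by congr (_ * expR _); field; rewrite gt_eqF.
Qed.


Lemma ratio_bound (m v th t L : R) : 0 < m -> 0 < v -> 0 < th -> 0 < L ->
  cond_density_X v m th t / normal_pdf (v * th) (Num.sqrt v) t <=
  expR (L ^+ 2 / (m * v)) /
  ((normal_peak (Num.sqrt v) / normal_peak (Num.sqrt (m * v / (m + 2))))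
   * (1 - expR (- th * L))).
Proof.
move=> m0 v0 th0 L0.
have mv0 : 0 < m * v by rewrite mulr_gt0.
have m20 : 0 < m + 2 by rewrite addr_gt0.
set r := normal_peak (Num.sqrt v) / normal_peak (Num.sqrt (m * v / (m + 2))).
have r0 : 0 < r.
  by rewrite divr_gt0// normal_peak_gt0// gt_eqF// sqrtr_gt0// divr_gt0.
have e0 : 0 < 1 - expR (- th * L).
  by rewrite subr_gt0 -expR0 ltr_expR mulNr oppr_lt0 mulr_gt0.
set pY := normal_peak (Num.sqrt (m * v)).
have pY0 : 0 < pY by rewrite normal_peak_gt0// gt_eqF// sqrtr_gt0.
set E2 := expR (- ((m + 1) * v * th ^+ 2 / 2) - L ^+ 2 / (m * v)).
set Plow := pY * E2 * r * ((1 - expR (- th * L)) / th).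
have Plow0 : 0 < Plow.
  by rewrite /Plow /E2; repeat apply: mulr_gt0 => //; rewrite ?expR_gt0 ?invr_gt0.
have Pl : Plow <= prob_event v m th.
  rewrite /prob_event -lee_fin fineK; first exact: lowerP.
  by apply: joint_fin; exact: measurable_halfplane.
have P0 : 0 < prob_event v m th by apply: lt_le_trans Pl.
set c := thresh v m th.
set Uup := pY * expR (m * v * th ^+ 2 / 2 - th * (c - t)) / th.
have Up : fine (normal_prob 0 (Num.sqrt (m * v)) `[c - t, +oo[) <= Uup.
  exact: upperU.
set E1 := expR (- th * t + v * th ^+ 2 / 2).
have pZ0 : 0 < normal_pdf (v * th) (Num.sqrt v) t.
  by rewrite pdfE ?sqrtr_gt0// mulr_gt0 ?expR_gt0// normal_peak_gt0// gt_eqF// sqrtr_gt0.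
rewrite /cond_density_X -/c (pX_pZ th)//.
set U := fine _.
set P := prob_event v m th.
set pZ := normal_pdf _ _ _.
have -> : pZ * E1 * U / P / pZ = E1 * U / P.
  by field; rewrite !gt_eqF.
apply: (@le_trans _ _ (E1 * Uup / P)).
  by rewrite ler_wpM2r ?invr_ge0 ?(ltW P0)// ler_wpM2l// expR_ge0.
apply: (@le_trans _ _ (E1 * Uup / Plow)).
  rewrite ler_wpM2l ?mulr_ge0 ?expR_ge0 ?divr_ge0 ?(ltW pY0) ?(ltW th0)//.
    by rewrite invr_ge0 ltW.
  by rewrite lef_pV2 // posrE.
have ex : E1 * expR (m * v * th ^+ 2 / 2 - th * (c - t)) =
    expR (L ^+ 2 / (m * v)) * E2.
  rewrite /E1 /E2 -!expRD /c /thresh; congr expR; field.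
  by rewrite !gt_eqF.
rewrite le_eqVlt; apply/orP; left; apply/eqP.
rewrite /Uup /Plow.
transitivity ((E1 * expR (m * v * th ^+ 2 / 2 - th * (c - t))) * pY / th /
   (pY * E2 * r * ((1 - expR (- th * L)) / th))).
  by ring.
rewrite ex; field.
by rewrite !gt_eqF ?expR_gt0.
Qed.


Lemma r_ge (m v : R) : 0 < m -> 0 < v ->
  m / (m + 2) <= normal_peak (Num.sqrt v) / normal_peak (Num.sqrt (m * v / (m + 2))).
Proof.
move=> m0 v0.
have m20 : 0 < m + 2 by rewrite addr_gt0.
have q0 : 0 <= m / (m + 2) by rewrite divr_ge0 ?ltW.
have q1 : m / (m + 2) <= 1 by rewrite ler_pdivrMr// mul1r lerDl.
rewrite /normal_peak !sqr_sqrtr ?divr_ge0 ?mulr_ge0 ?(ltW m0) ?(ltW v0) ?(ltW m20)//.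
have -> : m * v / (m + 2) * pi *+ 2 = (m / (m + 2)) * (v * pi *+ 2).
  by rewrite -!mulrnAr; ring.
rewrite sqrtrM // invrK mulrCA mulVf ?mulr1; last first.
  by rewrite gt_eqF// sqrtr_gt0 mulrn_wgt0// mulr_gt0// pi_gt0.
set q := m / (m + 2).
have s1 : Num.sqrt q <= 1.
  by rewrite -sqrtr1 ler_sqrt// /q; lra.
rewrite {1}(_ : q = Num.sqrt q * Num.sqrt q); last by rewrite -expr2 sqr_sqrtr.
by rewrite ler_piMr ?sqrtr_ge0.
Qed.

End S.

Lemma pointwise (R : realType) (theta delta m v t : R) : 0 < theta -> 0 < delta ->
  0 < m -> delta <= v ->
  cond_density_X v m theta t / normal_pdf (v * theta) (Num.sqrt v) t <=
  expR (Num.sqrt m / (m * delta)) * ((m + 2) / m)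
    / (1 - expR (- theta * Num.sqrt (Num.sqrt m))).
Proof.
move=> th0 d0 m0 dv.
have v0 : 0 < v by apply: lt_le_trans dv.
set L := Num.sqrt (Num.sqrt m).
have L0 : 0 < L by rewrite !sqrtr_gt0.
have L2 : L ^+ 2 = Num.sqrt m by rewrite sqr_sqrtr// sqrtr_ge0.
have e0 : 0 < 1 - expR (- theta * L).
  by rewrite subr_gt0 -expR0 ltr_expR mulNr oppr_lt0 mulr_gt0.
have m20 : 0 < m + 2 by rewrite addr_gt0.
apply: le_trans (ratio_bound t m0 v0 th0 L0) _.
set r := _ / _.
have rq := r_ge m0 v0.
have r0 : 0 < r by apply: lt_le_trans rq; rewrite divr_gt0.
rewrite -/r in rq.
have -> : expR (L ^+ 2 / (m * v)) / (r * (1 - expR (- theta * L))) =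
  (expR (L ^+ 2 / (m * v)) * r^-1) / (1 - expR (- theta * L)).
  by field; rewrite !gt_eqF.
rewrite ler_wpM2r ?invr_ge0 ?(ltW e0)//.
apply: ler_pM.
- exact: expR_ge0.
- by rewrite invr_ge0 ltW.
- rewrite ler_expR L2 ler_pM2l ?sqrtr_gt0 // lef_pV2 ?posrE ?mulr_gt0 //.
  by rewrite ler_pM2l.
- by rewrite -[X in _ <= X]invf_div lef_pV2 // posrE // divr_gt0.
Qed.
Section L.
Context {R : realType}.

Lemma cvgy_scale (f : R -> R) (k : R) : 0 < k ->
  f x @[x --> +oo] --> +oo -> (k * f x) @[x --> +oo] --> +oo.
Proof.
move=> k0 /cvgryPge fy; apply/cvgryPge => A.
near=> x.
rewrite -ler_pdivrMl//.
near: x; exact: fy.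
Unshelve. all: by end_near.
Qed.

Lemma cvgy_sqrt : Num.sqrt x @[x --> (+oo : set_system R)] --> +oo.
Proof.
apply/cvgryPge => A; near=> x.
apply: (le_trans (ler_norm A)).
rewrite -sqrtr_sqr ler_sqrt; near: x; apply: nbhs_pinfty_ge; exact: num_real.
Unshelve. all: by end_near.
Qed.


Lemma eps_cvg (theta delta : R) : 0 < theta -> 0 < delta ->
  (expR ((delta * Num.sqrt x)^-1) * (1 + 2 / x)
     / (1 - expR (- (theta * Num.sqrt (Num.sqrt x)))) - 1)
  @[x --> (+oo : set_system R)] --> 0.
Proof.
move=> th0 d0.
have sq2 : Num.sqrt (Num.sqrt x) @[x --> (+oo : set_system R)] --> +oo.
  exact: (cvg_comp _ _ cvgy_sqrt cvgy_sqrt).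
have HA : expR ((delta * Num.sqrt x)^-1) @[x --> (+oo : set_system R)] --> (1 : R).
  rewrite -expR0.
  apply: (cvg_comp (fun x => (delta * Num.sqrt x)^-1) expR (G := nbhs (0:R))); last first.
    exact: continuous_expR.
  have pos : \forall x \near (+oo : set_system R), 0 < delta * Num.sqrt x.
    near=> x; rewrite mulr_gt0// sqrtr_gt0.
    near: x; exact: nbhs_pinfty_gt.
  exact: (proj2 (gtr0_cvgV0 pos) (cvgy_scale d0 cvgy_sqrt)).
have HB : (1 + 2 / x) @[x --> (+oo : set_system R)] --> (1 : R).
  rewrite -[X in _ --> X]addr0.
  apply: cvgD; first exact: cvg_cst.
  rewrite -(mulr0 2).
  apply: cvgM; first exact: cvg_cst.
  have pos : \forall x \near (+oo : set_system R), 0 < id x.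
    near=> x; near: x; exact: nbhs_pinfty_gt.
  exact: (proj2 (gtr0_cvgV0 pos) cvg_id).
have HC : (1 - expR (- (theta * Num.sqrt (Num.sqrt x))))
    @[x --> (+oo : set_system R)] --> (1 : R).
  rewrite -[X in _ --> X]subr0.
  apply: cvgB; first exact: cvg_cst.
  exact: (cvg_comp _ _ (cvgy_scale th0 sq2) (@cvgr_expR R)).
have H := cvgB (cvgM (cvgM HA HB) (cvgV (oner_neq0 R) HC)) (cvg_cst (1 : R)).
rewrite mulr1 invr1 mulr1 subrr in H.
exact: H.
Unshelve. all: by end_near.
Qed.

End L.

Unset Implicit Arguments.

Theorem lemma3p4 (R : realType) (theta delta : R) (htheta : 0 < theta)
  (hdelta : 0 < delta) :
  exists eps : R -> R,
    (eps x @[x --> +oo] --> 0) /\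
    forall (m v t : R), 0 < m -> delta <= v -> v <= 1 -> t <= delta^-1 ->
      cond_density_X v m theta t / normal_pdf (v * theta) (Num.sqrt v) t
        <= 1 + eps m.
Proof.
exists (fun m => expR ((delta * Num.sqrt m)^-1) * (1 + 2 / m)
     / (1 - expR (- (theta * Num.sqrt (Num.sqrt m)))) - 1).
split; first exact: eps_cvg.
move=> m v t m0 dv _ _.
rewrite addrC subrK.
apply: le_trans (pointwise t htheta hdelta m0 dv) _.
have sm0 : 0 < Num.sqrt m by rewrite sqrtr_gt0.
have -> : Num.sqrt m / (m * delta) = (delta * Num.sqrt m)^-1.
  rewrite -{2}(sqr_sqrtr (ltW m0)); field.
  by rewrite !gt_eqF.
have -> : (m + 2) / m = 1 + 2 / m by field; rewrite gt_eqF.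
by rewrite mulNr.
Qed.
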